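(* In the toroidal setting below, if $(\lambda_1,\lambda_2)$ is an interior simple zero of $P$, then the map $\hat\phi$ is bounded.
   Context: Toroidal setting: ${\mathcal G}$ is a bipartite graph embedded on a torus with disk faces, admitting dimer covers, nondegenerate, with positive edge weights; $l_1,l_2$ dual cycles generating $H_1$ with $l_1\wedge l_2=+1$; $K(\lambda_1,\lambda_2)$ a real Kasteleyn matrix with entries of edges crossing $l_i$ multiplied by $\lambda_i^{\pm1}$ according to the side of the white vertex; $P=\det K(\lambda_1,\lambda_2)$. An interior simple zero is a simple zero of $P$ with $\lambda_1,\lambda_2$ not both real; there $\ker K$ and $\ker K^t$ are one-dimensional. $\tilde{\mathcal G}$ is the lift to the universal cover with deck translations $p_1,p_2$, $\tilde K$ the lift of $K(1,1)$, $\tilde{\mathcal G}^*$ its dual. $F\in\ker K(\lambda_1,\lambda_2)$, $G\in\ker K(\lambda_1,\lambda_2)^t$ are extended by $F(b+p_j)=\lambda_jF(b)$, $G(w+p_j)=\lambda_j^{-1}G(w)$. $\hat\omega(wb)=\overline{G(w)}\tilde K_{wb}F(b)$ and $\hat\phi$ on vertices of $\tilde{\mathcal G}^*$ is defined up to an additive constant by $\hat\phi(f_1)-\hat\phi(f_2)=\hat\omega(wb)$, $f_1$/$f_2$ the faces to the left/right of the edge oriented from $w$ to $b$. *)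

(* Defs.v *)
From HB Require Import structures.
From mathcomp Require Import all_boot all_order all_algebra all_fingroup.
From Stdlib Require Import Relations.
Set Implicit Arguments. Unset Strict Implicit. Unset Printing Implicit Defensive.
Import Order.TTheory GRing.Theory Num.Theory.
Local Open Scope ring_scope.

(* Combinatorial encoding of a bipartite graph embedded on the torus.        *)
(*  - darts : E * bool, (e, true) is e oriented from white to black,         *)
(*            (e, false) is e oriented from black to white                  *)
(*  - sigma : rotation system (counterclockwise cyclic order of the darts    *)
(*            leaving each vertex); it encodes the embedding                 *)
(*  - o1 e, o2 e : signed number of crossings of e with the dual cycles      *)
(*            l1, l2 (sign according to the side of the white vertex), so    *)
(*            that the lift of e joins (wv e, m) to (bv e, m + (o1 e, o2 e)) *)
(*            in the universal cover, whose vertices are vertices x Z^2.     *)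

Definition Z2 := (int * int)%type.
Definition addZ2 (a b : Z2) : Z2 := (a.1 + b.1, a.2 + b.2).
Definition oppZ2 (a : Z2) : Z2 := (- a.1, - a.2).

Section Torus.
Variables (n : nat) (E : finType) (wv bv : E -> 'I_n) (o1 o2 : E -> int).

Definition dart := (E * bool)%type.

(* vertex at the tail of a dart: inl = white, inr = black *)
Definition tail (d : dart) : 'I_n + 'I_n :=
  if d.2 then inl (wv d.1) else inr (bv d.1).

Definition eoff (e : E) : Z2 := (o1 e, o2 e).
Definition doff (d : dart) : Z2 := if d.2 then eoff d.1 else oppZ2 (eoff d.1).

Variable sigma : {perm dart}.

(* next dart along the boundary of the face lying to the left of d *)
Definition fsucc (d : dart) : dart := (sigma^-1)%g (d.1, ~~ d.2).

Definition rotation_system : Prop :=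
  (forall d, tail (sigma d) = tail d) /\
  (forall d d', tail d = tail d' -> fconnect sigma d d').

(* Euler characteristic V - E + F = 0 (genus one) *)
Definition euler_torus : Prop := (n + n + fcard fsucc (@predT dart) = #|E|)%N.

(* face boundaries are null-homologous: the offsets sum to 0 around faces *)
Definition faces_closed : Prop :=
  forall d, \sum_(d' <- fingraph.orbit fsucc d) (doff d').1 = 0 /\
            \sum_(d' <- fingraph.orbit fsucc d) (doff d').2 = 0.

Definition lift_adj (u v : ('I_n + 'I_n) * Z2) : Prop :=
  exists e m, u = (inl (wv e), m) /\ v = (inr (bv e), addZ2 m (eoff e)).

Definition lift_connected : Prop :=
  forall u v, clos_refl_sym_trans _ lift_adj u v.

(* each edge crosses each of the (simple) dual cycles at most once *)
Definition offsets_simple : Prop :=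
  forall e, o1 e \in [:: -1; 0; 1] /\ o2 e \in [:: -1; 0; 1].

Definition dimer_cover (M : {set E}) : Prop :=
  (forall i : 'I_n, #|[set e in M | wv e == i]| = 1%N) /\
  (forall j : 'I_n, #|[set e in M | bv e == j]| = 1%N).

Definition has_dimers_nondegenerate : Prop :=
  (exists M, dimer_cover M) /\ (forall e, exists2 M, dimer_cover M & e \in M).

Variable C : numClosedFieldType.
Variable K : E -> C.   (* entries of the real Kasteleyn matrix K(1,1), per edge *)

(* real Kasteleyn signs with positive (nonzero real) weights: for a face of   *)
(* degree 2k, the alternating product of the edge entries around the face    *)
(* has sign (-1)^(k+1)                                                        *)
Definition kasteleyn : Prop :=
  (forall e, K e \is Num.real /\ K e != 0) /\
  (forall d, 0 < (-1) ^+ ((size (fingraph.orbit fsucc d))./2 + 1) *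
                 \prod_(d' <- fingraph.orbit fsucc d) (if d'.2 then K d'.1 else (K d'.1)^-1)).

Definition lampow (l1 l2 : C) (m : Z2) : C := l1 ^ m.1 * l2 ^ m.2.

(* K(lambda1, lambda2), rows indexed by white vertices, columns by black *)
Definition Kmat (l1 l2 : C) : 'M[C]_n :=
  \matrix_(i, j) \sum_(e | (wv e == i) && (bv e == j)) K e * lampow l1 l2 (eoff e).

Definition P (l1 l2 : C) : C := \det (Kmat l1 l2).

(* z * K(z, l2) and z * K(l1, z) as polynomial matrices (offsets in {-1,0,1}) *)
Definition Kpoly1 (l2 : C) : 'M[{poly C}]_n :=
  \matrix_(i, j) \sum_(e | (wv e == i) && (bv e == j))
     (K e * l2 ^ o2 e) *: 'X^(absz (o1 e + 1)).
Definition Kpoly2 (l1 : C) : 'M[{poly C}]_n :=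
  \matrix_(i, j) \sum_(e | (wv e == i) && (bv e == j))
     (K e * l1 ^ o1 e) *: 'X^(absz (o2 e + 1)).

(* partial derivatives of P(z1,z2) = z1^-n det(Kpoly1 z2)(z1) etc. *)
Definition dP1 (l1 l2 : C) : C :=
  l1 ^- n * ((\det (Kpoly1 l2))^`()).[l1]
  - n%:R * l1 ^- n.+1 * (\det (Kpoly1 l2)).[l1].
Definition dP2 (l1 l2 : C) : C :=
  l2 ^- n * ((\det (Kpoly2 l1))^`()).[l2]
  - n%:R * l2 ^- n.+1 * (\det (Kpoly2 l1)).[l2].

Definition interior_simple_zero (l1 l2 : C) : Prop :=
  [/\ l1 != 0, l2 != 0, P l1 l2 = 0,
      (dP1 l1 l2 != 0) || (dP2 l1 l2 != 0)
    & ~~ ((l1 \is Num.real) && (l2 \is Num.real))].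

(* omega-hat on the lifted edge (e, m): white (wv e, m), black (bv e, m + eoff e), *)
(* with F(b + m) = lambda^m F(b), G(w + m) = lambda^-m G(w)                    *)
Definition omega_hat (l1 l2 : C) (F G : 'cV[C]_n) (e : E) (m : Z2) : C :=
  (lampow l1 l2 (oppZ2 m) * G (wv e) 0)^* * K e
  * (lampow l1 l2 (addZ2 m (eoff e)) * F (bv e) 0).

(* phi-hat, seen as a function on lifted darts (the lifted face to the left  *)
(* of the dart), constant along lifted faces, with the prescribed jumps       *)
Definition is_phi_hat (l1 l2 : C) (F G : 'cV[C]_n) (phi : dart -> Z2 -> C) : Prop :=
  (forall d m, phi (fsucc d) (addZ2 m (doff d)) = phi d m) /\
  (forall e m, phi (e, true) m - phi (e, false) (addZ2 m (eoff e))
               = omega_hat l1 l2 F G e m).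

End Torus.

(* Main.v *)
Require Import Defs.
From HB Require Import structures.
From mathcomp Require Import all_boot all_order all_algebra all_fingroup.
From mathcomp Require Import ring.
From Stdlib Require Import Relations.
Import Order.TTheory GRing.Theory Num.Theory.
Local Open Scope ring_scope.
Set Implicit Arguments. Unset Strict Implicit.

Lemma Z2eq (a b : Z2) : a.1 = b.1 -> a.2 = b.2 -> a = b.
Proof. by case: a b => ? ? [? ?] /= -> ->. Qed.

Definition rv {E : finType} (d : dart E) : dart E := (d.1, ~~ d.2).

Section Conn.
Variables (n : nat) (E : finType) (wv bv : E -> 'I_n) (o1 o2 : E -> int).
Variable sigma : {perm dart E}.
Variable C : numClosedFieldType.
Variable chi : dart E -> Z2 -> C.
Hypothesis hrot : rotation_system wv bv sigma.
Hypothesis hconn : lift_connected wv bv o1 o2.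
Hypothesis hf : forall d m, chi (fsucc sigma d) (addZ2 m (doff o1 o2 d)) = chi d m.
Hypothesis he : forall e m, chi (e, true) m = chi (e, false) (addZ2 m (eoff o1 o2 e)).

Lemma rv_ok d m : chi (rv d) (addZ2 m (doff o1 o2 d)) = chi d m.
Proof.
case: d => e [] /=; rewrite /rv /doff /=; first by rewrite he.
rewrite he; congr chi; apply: Z2eq => /=; ring.
Qed.

Lemma sigma_ok d m : chi (sigma d) m = chi d m.
Proof.
rewrite -(rv_ok (sigma d) m).
have h : fsucc sigma (rv (sigma d)) = d.
  by rewrite /fsucc /rv /= negbK -surjective_pairing permK.
have := hf (rv (sigma d)) (addZ2 m (doff o1 o2 (sigma d))).
rewrite h => <-; congr chi; rewrite /doff /rv /=.
case: (sigma d) => e [] /=; apply: Z2eq => /=; ring.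
Qed.

Lemma same_tail d d' m : tail wv bv d = tail wv bv d' -> chi d m = chi d' m.
Proof.
move=> ht; have := hrot.2 _ _ ht.
apply: (fconnect_invariant (k := fun d => chi d m)).
by move=> x; rewrite /= sigma_ok eqxx.
Qed.

Lemma chi_path u v : clos_refl_sym_trans_1n _ (lift_adj wv bv o1 o2) u v ->
  forall d m d' m', (tail wv bv d, m) = u -> (tail wv bv d', m') = v -> chi d m = chi d' m'.
Proof.
elim=> [x|x y z Hxy _ IH] d m d' m' Hu Hv.
  by rewrite -Hv in Hu; case: Hu => ht <-; apply: same_tail.
case: Hxy => [[e [k [Ex Ey]]]|[e [k [Ey Ex]]]].
- rewrite Ex in Hu; subst y; case: Hu => ht ->.
  rewrite (@same_tail d (e, true) k) // he.
  by apply: IH Hv.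
- rewrite Ex in Hu; subst y; case: Hu => ht ->.
  rewrite (@same_tail d (e, false)) //.
  rewrite -he; by apply: IH Hv.
Qed.

Lemma chi_const d m d' m' : chi d m = chi d' m'.
Proof.
apply: (@chi_path (tail wv bv d, m) (tail wv bv d', m')) => //.
exact/clos_rst_rst1n_iff/hconn.
Qed.
End Conn.

Lemma int_const (C : numClosedFieldType) (g : int -> C) :
  (forall k, g (k + 1) = g k) -> forall k, g k = g 0.
Proof.
move=> hg k.
have hp : forall n : nat, g n%:Z = g 0.
  elim=> // n IH; by rewrite -IH -(hg n) -PoszD addn1.
have hn : forall n : nat, g (- n%:Z) = g 0.
  elim=> // n IH; rewrite -IH -(hg (- n.+1%:Z)); congr g.
  by rewrite -addn1 PoszD opprD addrNK.
by case: k => m; [apply: hp | rewrite NegzE; apply: hn].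
Qed.

Lemma quasi (C : numClosedFieldType) (f : int -> int -> C) (u1 u2 a b : C) :
  `|u1| = 1 -> `|u2| = 1 -> u1 != 1 ->
  (forall x y, f (x + 1) y = u1 * f x y + a) ->
  (forall x y, f x (y + 1) = u2 * f x y + b) ->
  forall x y, `|f x y| <= `|f 0 0 - a / (1 - u1)| + `|a / (1 - u1)|.
Proof.
move=> n1 n2 u1n h1 h2.
have hu : 1 - u1 != 0 by rewrite subr_eq0 eq_sym.
set c := a / (1 - u1).
have hc : a = c * (1 - u1) by rewrite /c divfK.
have hcomm : b * (1 - u1) = a * (1 - u2).
  have e1 := h2 (0 + 1) 0; have e2 := h1 0 (0 + 1).
  have e1' := h1 0 0; have e2' := h2 0 0.
  have H : (u2 * (u1 * f 0 0 + a) + b) - (u1 * (u2 * f 0 0 + b) + a) = 0.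
    by rewrite -e1' -e2' -e1 -e2 subrr.
  apply/eqP; rewrite -subr_eq0 -H; apply/eqP; ring.
pose psi x y := f x y - c.
have p1 x y : psi (x + 1) y = u1 * psi x y.
  by rewrite /psi h1 hc; ring.
have p2 x y : psi x (y + 1) = u2 * psi x y.
  rewrite /psi h2.
  have hb : b = c * (1 - u2).
    apply: (mulIf hu); rewrite hcomm hc; ring.
  rewrite hb; ring.
have q1 y x : `|psi x y| = `|psi 0 y|.
  apply: (@int_const _ (fun x => `|psi x y|)) => k.
  by rewrite p1 normrM n1 mul1r.
have q2 y : `|psi 0 y| = `|psi 0 0|.
  apply: (@int_const _ (fun y => `|psi 0 y|)) => k.
  by rewrite p2 normrM n2 mul1r.
move=> x y.
have -> : f x y = psi x y + c by rewrite /psi subrK.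
apply: le_trans (ler_normD _ _) _.
by rewrite q1 q2.
Qed.

Section Main.
Variables (C : numClosedFieldType) (l1 l2 : C).
Hypotheses (h1 : l1 != 0) (h2 : l2 != 0).

Lemma lampow_add a b : lampow l1 l2 (addZ2 a b) = lampow l1 l2 a * lampow l1 l2 b.
Proof. rewrite /lampow /addZ2 /= !expfzDr //; ring. Qed.

Definition nu s : C := (lampow l1 l2 (oppZ2 s))^* * lampow l1 l2 s.

Lemma norm_nu s : `|nu s| = 1.
Proof.
rewrite /nu normrM norm_conjC -normrM -lampow_add.
have -> : addZ2 (oppZ2 s) s = (0, 0) by apply: Z2eq; rewrite /= addNr.
by rewrite /lampow /= mulr1 normr1.
Qed.

Lemma omega_shift n (E : finType) (wv bv : E -> 'I_n) (o1 o2 : E -> int) K F G e m s :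
  omega_hat wv bv o1 o2 K l1 l2 F G e (addZ2 m s)
  = nu s * omega_hat wv bv o1 o2 K l1 l2 F G e m.
Proof.
rewrite /omega_hat /nu.
have -> : oppZ2 (addZ2 m s) = addZ2 (oppZ2 m) (oppZ2 s).
  by apply: Z2eq; rewrite /= opprD.
have -> : addZ2 (addZ2 m s) (eoff o1 o2 e) = addZ2 (addZ2 m (eoff o1 o2 e)) s.
  by apply: Z2eq; rewrite /=; ring.
rewrite !lampow_add !rmorphM /=; ring.
Qed.

Lemma nu1 : nu (1, 0) = 1 -> l1 \is Num.real.
Proof.
rewrite /nu /lampow /oppZ2 /= oppr0 !expr0z !mulr1 exprN1 expr1z fmorphV => H.
rewrite CrealE; apply/eqP.
have hc : l1^* != 0 by rewrite conjC_eq0.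
have := congr1 (fun z => l1^* * z) H; rewrite /= mulrA mulfV // mul1r mulr1 => E.
by rewrite -E.
Qed.

Lemma nu2 : nu (0, 1) = 1 -> l2 \is Num.real.
Proof.
rewrite /nu /lampow /oppZ2 /= oppr0 !expr0z !mul1r exprN1 expr1z fmorphV => H.
rewrite CrealE; apply/eqP.
have hc : l2^* != 0 by rewrite conjC_eq0.
have := congr1 (fun z => l2^* * z) H; rewrite /= mulrA mulfV // mul1r mulr1 => E.
by rewrite -E.
Qed.
End Main.

Theorem mainTheorem7
  (n : nat) (E : finType) (wv bv : E -> 'I_n) (o1 o2 : E -> int)
  (sigma : {perm dart E}) (C : numClosedFieldType) (K : E -> C)
  (l1 l2 : C) (F G : 'cV[C]_n) (phi : dart E -> Z2 -> C) :
  rotation_system wv bv sigma ->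
  euler_torus n sigma ->
  faces_closed o1 o2 sigma ->
  lift_connected wv bv o1 o2 ->
  offsets_simple o1 o2 ->
  has_dimers_nondegenerate wv bv ->
  kasteleyn sigma K ->
  interior_simple_zero wv bv o1 o2 K l1 l2 ->
  Kmat wv bv o1 o2 K l1 l2 *m F = 0 ->
  (Kmat wv bv o1 o2 K l1 l2)^T *m G = 0 ->
  is_phi_hat wv bv o1 o2 sigma K l1 l2 F G phi ->
  exists M : C, forall d m, `|phi d m| <= M.
Proof.
move=> hrot _ _ hconn _ _ _ [hl1 hl2 _ _ hnr] _ _ [hpf hpe].
have chiC s d m d' m' :
    phi d (addZ2 m s) - nu l1 l2 s * phi d m = phi d' (addZ2 m' s) - nu l1 l2 s * phi d' m'.
  apply: (@chi_const n E wv bv o1 o2 sigma C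
            (fun d m => phi d (addZ2 m s) - nu l1 l2 s * phi d m) hrot hconn).
  - move=> d0 m0 /=.
    have -> : addZ2 (addZ2 m0 (doff o1 o2 d0)) s = addZ2 (addZ2 m0 s) (doff o1 o2 d0).
      by apply: Z2eq; rewrite /=; ring.
    by rewrite !hpf.
  - move=> e m0 /=.
    have -> : addZ2 (addZ2 m0 (eoff o1 o2 e)) s = addZ2 (addZ2 m0 s) (eoff o1 o2 e).
      by apply: Z2eq; rewrite /=; ring.
    have H := hpe e (addZ2 m0 s).
    rewrite omega_shift // -hpe in H.
    apply/eqP; rewrite -subr_eq0; apply/eqP.
    move/eqP: H; rewrite -subr_eq0 => /eqP H.
    rewrite -[RHS]H; ring.
pose u1 := nu l1 l2 (1, 0); pose u2 := nu l1 l2 (0, 1).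
pose a d := phi d (addZ2 (0, 0) (1, 0)) - u1 * phi d (0, 0).
pose b d := phi d (addZ2 (0, 0) (0, 1)) - u2 * phi d (0, 0).
pose B d := if u1 != 1
  then `|phi d (0, 0) - a d / (1 - u1)| + `|a d / (1 - u1)|
  else `|phi d (0, 0) - b d / (1 - u2)| + `|b d / (1 - u2)|.
have hB d m : `|phi d m| <= B d.
  have f1 x y : phi d (x + 1, y) = u1 * phi d (x, y) + a d.
    have := chiC (1, 0) d (x, y) d (0, 0).
    have -> : addZ2 (x, y) (1, 0) = (x + 1, y) by apply: Z2eq; rewrite /= ?addr0.
    by rewrite /a /b /u1 /u2 => <-; ring.
  have f2 x y : phi d (x, y + 1) = u2 * phi d (x, y) + b d.
    have := chiC (0, 1) d (x, y) d (0, 0).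
    have -> : addZ2 (x, y) (0, 1) = (x, y + 1) by apply: Z2eq; rewrite /= ?addr0.
    by rewrite /a /b /u1 /u2 => <-; ring.
  case: m => x y; rewrite /B.
  case: ifP => hu1.
    exact: (@quasi C (fun x y => phi d (x, y)) u1 u2 (a d) (b d)
              (norm_nu hl1 hl2 _) (norm_nu hl1 hl2 _) hu1 f1 f2 x y).
  have hu2 : u2 != 1.
    apply/negP => /eqP e2; move/negbFE/eqP: hu1 => e1.
    by move/negP: hnr; apply; rewrite (nu1 hl1 e1) (nu2 hl2 e2).
  exact: (@quasi C (fun x y => phi d (y, x)) u2 u1 (b d) (a d)
              (norm_nu hl1 hl2 _) (norm_nu hl1 hl2 _) hu2 (fun x y => f2 y x)
              (fun x y => f1 y x) y x).
have hB0 d : 0 <= B d by rewrite /B; case: ifP => _; rewrite addr_ge0.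
exists (\sum_d B d) => d m.
apply: le_trans (hB d m) _.
rewrite (bigD1 d) //= lerDl sumr_ge0 // => i _; exact: hB0.
Qed.
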